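(* A locally generated Lie superalgebra $G$ is minimal if and only if it is $(-2,2)$-transitive. In particular, every locally generated $(0,0)$-transitive Lie superalgebra is minimal.
   Context: All vector spaces are over $\mathbb{K}=\mathbb{R}$ or $\mathbb{C}$ and are $\mathbb{Z}$-graded; parity is degree mod 2; morphisms preserve degree. A Lie superalgebra is a graded space with degree-preserving bracket satisfying graded antisymmetry and graded Jacobi. $G_{\pm}=\bigoplus_{k\geq1}G_{\pm k}$, $G_{m-}=\bigoplus_{k\le m}G_k$, $G_{n+}=\bigoplus_{k\ge n}G_k$. The local part $G^{\mathrm{loc}}$ is $G_{-1}\oplus G_0\oplus G_1$ with restricted bracket (a local Lie superalgebra: brackets $G_i\otimes G_j\to G_{i+j}$ only for $i+j\in\{-1,0,1\}$); $G$ is locally generated if generated by $G^{\mathrm{loc}}$. A locally generated $G$ is minimal if for every locally generated Lie superalgebra $H$ every isomorphism of local Lie superalgebras $H^{\mathrm{loc}}\to G^{\mathrm{loc}}$ extends to a Lie superalgebra morphism $H\to G$. $G$ is negatively $n$-transitive if for $x\in G_{n+}$, $[G_-,x]=0$ implies $x=0$; positively $m$-transitive if for $x\in G_{m-}$, $[G_+,x]=0$ implies $x=0$; $(m,n)$-transitive if both. *)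

(* Defs.v *)
(* Z-graded Lie superalgebras over a characteristic-0 field K
   (K : numFieldType, which covers K = R and K = C). *)
From mathcomp Require Import all_boot all_order all_algebra.
Set Implicit Arguments. Unset Strict Implicit. Unset Printing Implicit Defensive.
Import Order.TTheory GRing.Theory Num.Theory.
Local Open Scope ring_scope.

Definition ksign (K : numFieldType) (i j : int) : K :=
  (-1) ^+ (odd (absz i) && odd (absz j)).

(* A Z-graded Lie superalgebra structure on the K-vector space V:
   V = (+)_{k in Z} G_k (G_k = [deg k]), with a bilinear, degree-preserving
   bracket satisfying graded antisymmetry and graded Jacobi. *)
Record LieSA (K : numFieldType) (V : lmodType K) := {
  deg : int -> V -> Prop;
  deg0 : forall k, deg k 0;
  degD : forall k (a : K) x y, deg k x -> deg k y -> deg k (a *: x + y);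
  deg_span : forall v : V, exists (s : seq int) (c : int -> V),
      (forall k, deg k (c k)) /\ v = \sum_(k <- s) c k;
  deg_indep : forall (s : seq int) (c : int -> V), uniq s ->
      (forall k, k \in s -> deg k (c k)) -> \sum_(k <- s) c k = 0 ->
      forall k, k \in s -> c k = 0;
  br : V -> V -> V;
  brDl : forall (a : K) x y z, br (a *: x + y) z = a *: br x z + br y z;
  brDr : forall (a : K) x y z, br z (a *: x + y) = a *: br z x + br z y;
  br_deg : forall i j x y, deg i x -> deg j y -> deg (i + j) (br x y);
  br_anti : forall i j x y, deg i x -> deg j y ->
      br x y = - (ksign K i j *: br y x);
  br_jacobi : forall i j x y z, deg i x -> deg j y ->
      br x (br y z) = br (br x y) z + ksign K i j *: br y (br x z)
}.

Section Defs.
Variables (K : numFieldType) (V : lmodType K) (G : LieSA V).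

Definition in_graded_span (P : int -> bool) (x : V) : Prop :=
  exists (s : seq int) (c : int -> V),
    (forall k, k \in s -> P k) /\ (forall k, deg G k (c k)) /\
    x = \sum_(k <- s) c k.

Definition local_hom (x : V) : Prop := deg G (-1) x \/ deg G 0 x \/ deg G 1 x.

Inductive generated (P : V -> Prop) : V -> Prop :=
  | gen_base x : P x -> generated P x
  | gen_zero : generated P 0
  | gen_lin (a : K) x y : generated P x -> generated P y ->
      generated P (a *: x + y)
  | gen_br x y : generated P x -> generated P y -> generated P (br G x y).

Definition locally_generated : Prop := forall v, generated local_hom v.

Definition neg_transitive (n : int) : Prop :=
  forall x, in_graded_span (fun k => n <= k) x ->
    (forall k y, 1 <= k -> deg G (- k) y -> br G y x = 0) -> x = 0.

Definition pos_transitive (m : int) : Prop :=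
  forall x, in_graded_span (fun k => k <= m) x ->
    (forall k y, 1 <= k -> deg G k y -> br G y x = 0) -> x = 0.

Definition mn_transitive (m n : int) : Prop := pos_transitive m /\ neg_transitive n.

End Defs.

Definition is_local_deg (k : int) : bool := (k == -1) || (k == 0) || (k == 1).

(* f : H^loc -> G^loc is an isomorphism of local Lie superalgebras
   (f is only relevant on the homogeneous components of degree -1, 0, 1). *)
Definition local_iso (K : numFieldType) (W V : lmodType K)
    (H : LieSA W) (G : LieSA V) (f : W -> V) : Prop :=
  (forall k, is_local_deg k -> forall x, deg H k x -> deg G k (f x)) /\
  (forall k, is_local_deg k -> forall (a : K) x y, deg H k x -> deg H k y ->
      f (a *: x + y) = a *: f x + f y) /\
  (forall k, is_local_deg k -> forall x y, deg H k x -> deg H k y ->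
      f x = f y -> x = y) /\
  (forall k, is_local_deg k -> forall y, deg G k y ->
      exists2 x, deg H k x & f x = y) /\
  (forall i j, is_local_deg i -> is_local_deg j -> is_local_deg (i + j) ->
      forall x y, deg H i x -> deg H j y -> f (br H x y) = br G (f x) (f y)).

Definition lie_morphism (K : numFieldType) (W V : lmodType K)
    (H : LieSA W) (G : LieSA V) (g : W -> V) : Prop :=
  (forall (a : K) x y, g (a *: x + y) = a *: g x + g y) /\
  (forall k x, deg H k x -> deg G k (g x)) /\
  (forall x y, g (br H x y) = br G (g x) (g y)).

Definition minimal (K : numFieldType) (V : lmodType K) (G : LieSA V) : Prop :=
  locally_generated G /\
  forall (W : lmodType K) (H : LieSA W), locally_generated H ->
    forall f : W -> V, local_iso H G f ->
    exists g : W -> V, lie_morphism H G g /\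
      (forall x, local_hom H x -> g x = f x).

(* Main.v *)
From HB Require Import structures.
Require Import Defs.
From mathcomp Require Import all_boot all_order all_algebra generic_quotient.
From mathcomp Require Import zify.
From Stdlib Require Import ClassicalEpsilon.
Set Implicit Arguments. Unset Strict Implicit. Unset Printing Implicit Defensive.
Import Order.TTheory GRing.Theory Num.Theory.
Local Open Scope ring_scope.

Section LLdef.
Variable K : numFieldType.
Record LL (U : lmodType K) := MkLL {
  dg : int -> U -> Prop;
  bb : U -> U -> U;
  dg0 : forall k, dg k 0;
  dgD : forall k (a : K) x y, dg k x -> dg k y -> dg k (a *: x + y);
  bDl : forall (a : K) x y z, bb (a *: x + y) z = a *: bb x z + bb y z;
  bDr : forall (a : K) x y z, bb z (a *: x + y) = a *: bb z x + bb z y;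
  b_deg : forall i j x y, dg i x -> dg j y -> dg (i + j) (bb x y);
  b_anti : forall i j x y, dg i x -> dg j y -> bb x y = - (ksign K i j *: bb y x);
  b_jac : forall i j x y z, dg i x -> dg j y ->
      bb x (bb y z) = bb (bb x y) z + ksign K i j *: bb y (bb x z)
}.
End LLdef.

Section LLbasic.
Variables (K : numFieldType) (U : lmodType K) (L : LL U).
Local Notation dg := (dg L).
Local Notation bb := (bb L).

Lemma bb0l z : bb 0 z = 0.
Proof.
have := bDl L 1 0 0 z; rewrite !scale1r addr0 => h.
by move/(congr1 (fun t => t - bb 0 z)): h; rewrite addrK subrr => /esym.
Qed.
Lemma bb0r z : bb z 0 = 0.
Proof.
have := bDr L 1 0 0 z; rewrite !scale1r addr0 => h.
by move/(congr1 (fun t => t - bb z 0)): h; rewrite addrK subrr => /esym.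
Qed.
Lemma bbDl x y z : bb (x + y) z = bb x z + bb y z.
Proof. by have := bDl L 1 x y z; rewrite !scale1r. Qed.
Lemma bbDr x y z : bb z (x + y) = bb z x + bb z y.
Proof. by have := bDr L 1 x y z; rewrite !scale1r. Qed.
Lemma bbZl a x z : bb (a *: x) z = a *: bb x z.
Proof. by have := bDl L a x 0 z; rewrite !addr0 bb0l addr0. Qed.
Lemma bbZr a x z : bb z (a *: x) = a *: bb z x.
Proof. by have := bDr L a x 0 z; rewrite !addr0 bb0r addr0. Qed.
Lemma bbNl x z : bb (- x) z = - bb x z.
Proof. by rewrite -scaleN1r bbZl scaleN1r. Qed.
Lemma bbNr x z : bb z (- x) = - bb z x.
Proof. by rewrite -scaleN1r bbZr scaleN1r. Qed.
Lemma bbBl x y z : bb (x - y) z = bb x z - bb y z.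
Proof. by rewrite bbDl bbNl. Qed.
Lemma bbBr x y z : bb z (x - y) = bb z x - bb z y.
Proof. by rewrite bbDr bbNr. Qed.
Lemma bb_suml (I : Type) (r : seq I) (P : pred I) (F : I -> U) z :
  bb (\sum_(i <- r | P i) F i) z = \sum_(i <- r | P i) bb (F i) z.
Proof. by apply: (big_morph (fun x => bb x z)); [move=> a b; exact: bbDl | exact: bb0l]. Qed.
Lemma bb_sumr (I : Type) (r : seq I) (P : pred I) (F : I -> U) z :
  bb z (\sum_(i <- r | P i) F i) = \sum_(i <- r | P i) bb z (F i).
Proof. by apply: (big_morph (fun x => bb z x)); [move=> a b; exact: bbDr | exact: bb0r]. Qed.

Lemma dg_add k x y : dg k x -> dg k y -> dg k (x + y).
Proof. by move=> hx hy; have := dgD 1 hx hy; rewrite scale1r. Qed.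
Lemma dgZ k a x : dg k x -> dg k (a *: x).
Proof. by move=> hx; have := dgD a hx (dg0 L k); rewrite addr0. Qed.
Lemma dgN k x : dg k x -> dg k (- x).
Proof. by move=> hx; rewrite -scaleN1r; apply: dgZ. Qed.
Lemma dg_sum k (I : Type) (r : seq I) (P : pred I) (F : I -> U) :
  (forall i, P i -> dg k (F i)) -> dg k (\sum_(i <- r | P i) F i).
Proof.
move=> h; apply: (big_ind (dg k)); [exact: dg0 | exact: dg_add | exact: h].
Qed.
End LLbasic.

Section Span.
Variables (K : numFieldType) (U : lmodType K).
Inductive spn (S : U -> Prop) : U -> Prop :=
 | spn0 : spn S 0
 | spnB x : S x -> spn S x
 | spnL (a : K) x y : spn S x -> spn S y -> spn S (a *: x + y).

Lemma spnD S x y : spn S x -> spn S y -> spn S (x + y).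
Proof. by move=> hx hy; have := spnL 1 hx hy; rewrite scale1r. Qed.
Lemma spnZ S a x : spn S x -> spn S (a *: x).
Proof. by move=> hx; have := spnL a hx (spn0 S); rewrite addr0. Qed.
Lemma spnN S x : spn S x -> spn S (- x).
Proof. by move=> hx; rewrite -scaleN1r; apply: spnZ. Qed.
Lemma spnBB S x y : spn S x -> spn S y -> spn S (x - y).
Proof. by move=> hx hy; apply: spnD => //; apply: spnN. Qed.
Lemma spn_sum S (I : Type) (r : seq I) (P : pred I) (F : I -> U) :
  (forall i, P i -> spn S (F i)) -> spn S (\sum_(i <- r | P i) F i).
Proof.
move=> h; apply: (big_ind (spn S)); [exact: spn0 | exact: spnD | exact: h].
Qed.
Lemma spn_mono (S T : U -> Prop) x : (forall y, S y -> T y) -> spn S x -> spn T x.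
Proof.
move=> hST; elim.
- exact: spn0.
- by move=> y /hST; exact: spnB.
- by move=> a y z _ hy _ hz; exact: spnL.
Qed.
Lemma spn_idem (S : U -> Prop) x : spn (spn S) x -> spn S x.
Proof.
elim.
- exact: spn0.
- by [].
- by move=> a y z _ hy _ hz; exact: spnL.
Qed.
Lemma spn_sub (S T : U -> Prop) x : T 0 -> (forall a y z, T y -> T z -> T (a *: y + z)) ->
  (forall y, S y -> T y) -> spn S x -> T x.
Proof.
move=> h0 hL hST; elim=> //.
by move=> a y z _ hy _ hz; exact: hL.
Qed.
End Span.

Section SpanBr.
Variables (K : numFieldType) (U : lmodType K) (L : LL U).
Lemma spn_br (S T R : U -> Prop) x y :
  (forall a b, S a -> T b -> spn R (bb L a b)) -> spn S x -> spn T y ->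
  spn R (bb L x y).
Proof.
move=> h hx hy; elim: hx => [|a ha|c a a' _ h1 _ h2].
- by rewrite bb0l; exact: spn0.
- elim: hy => [|b hb|c b b' _ h1 _ h2].
  + by rewrite bb0r; exact: spn0.
  + exact: h.
  + by rewrite bDr; apply: spnL.
- by rewrite bDl; apply: spnL.
Qed.
End SpanBr.

Section Groups.
Variables (K : numFieldType) (U : lmodType K).

Definition gsum (s : seq (int * U)) (D : int) : U := \sum_(p <- s | p.1 == D) p.2.

Lemma sum_if_eq (T : eqType) (t : seq T) (x : T) (v : U) :
  uniq t -> x \in t -> \sum_(k <- t) (if x == k then v else 0) = v.
Proof.
move=> ut xt; rewrite -big_mkcond (big_rem x) //= eqxx big1_seq ?addr0 //.
move=> k /andP[/eqP <-]; by rewrite mem_rem_uniqF.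
Qed.

Lemma sum_groups (S : U -> Prop) : S 0 -> (forall x y, S x -> S y -> S (x + y)) ->
  forall s, (forall D, S (gsum s D)) -> S (\sum_(p <- s) p.2).
Proof.
move=> S0 SD s; have [n] := ubnP (size s); elim: n s => // n IH [|p0 s'] hsz hg.
  by rewrite big_nil.
rewrite (bigID (fun p : int * U => p.1 == p0.1)) /=; apply: SD.
  exact: hg.
rewrite -big_filter; apply: IH.
  move: hsz => /=; rewrite eqxx /=; rewrite size_filter; have := count_size (fun p : int * U => p.1 != p0.1) s'.
  lia.
move=> D; rewrite /gsum big_filter_cond.
case: (eqVneq D p0.1) => [->|hD].
  by rewrite big_pred0 // => p; rewrite andNb.
rewrite (eq_bigl (fun p : int * U => p.1 == D)); first exact: (hg D).
move=> p /=; case: (eqVneq p.1 D) => [->|_]; by rewrite ?hD ?andbF ?andbT.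
Qed.

Definition indepL (L : LL U) := forall (s : seq int) (c : int -> U), uniq s ->
  (forall k, k \in s -> dg L k (c k)) -> \sum_(k <- s) c k = 0 ->
  forall k, k \in s -> c k = 0.

Variable L : LL U.
Hypothesis hind : indepL L.

Lemma gsum_dg s D : (forall p, p \in s -> dg L p.1 p.2) -> dg L D (gsum s D).
Proof.
move=> hs; rewrite /gsum big_seq_cond; apply: dg_sum => p /andP[/hs ? /eqP <-] //.
Qed.

Lemma gsum_zero s : (forall p, p \in s -> dg L p.1 p.2) -> \sum_(p <- s) p.2 = 0 ->
  forall D, gsum s D = 0.
Proof.
move=> hs h0 D; set t := undup (D :: map fst s).
have ut : uniq t by apply: undup_uniq.
apply: (hind ut) => //.
- by move=> k _; apply: gsum_dg.
- rewrite /gsum; under eq_bigr do rewrite big_mkcond.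
  rewrite exchange_big /= -[RHS]h0 big_seq [RHS]big_seq; apply: eq_bigr => p ps.
  rewrite (sum_if_eq (p.2)) //.
  by rewrite mem_undup in_cons; apply/orP; right; apply/mapP; exists p.
- by rewrite mem_undup mem_head.
Qed.

Lemma gsum_homog s e z : (forall p, p \in s -> dg L p.1 p.2) -> dg L e z ->
  z = \sum_(p <- s) p.2 -> forall D, gsum s D = if D == e then z else 0.
Proof.
move=> hs hz hsum D.
have h : gsum ((e, - z) :: s) D = 0.
  apply: gsum_zero.
  - move=> p; rewrite in_cons => /orP[/eqP -> /=|]; [exact: dgN | exact: hs].
  - by rewrite big_cons /= -hsum addNr.
move: h; rewrite /gsum big_cons /=.
case: (eqVneq e D) => [<-|ne]; last by [].
by move/eqP; rewrite addrC subr_eq0 => /eqP.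
Qed.
End Groups.

Lemma ksign0 (K : numFieldType) j : ksign K 0 j = 1.
Proof. by rewrite /ksign /= expr0. Qed.

Section Gen.
Variables (K : numFieldType) (U : lmodType K) (L : LL U).
Inductive genL (S : U -> Prop) : U -> Prop :=
  | gL_base x : S x -> genL S x
  | gL_zero : genL S 0
  | gL_lin (a : K) x y : genL S x -> genL S y -> genL S (a *: x + y)
  | gL_br x y : genL S x -> genL S y -> genL S (bb L x y).
End Gen.

Lemma genL_mono (K : numFieldType) (U : lmodType K) (L : LL U) (P Q : U -> Prop) x :
  (forall y, P y -> Q y) -> genL L P x -> genL L Q x.
Proof.
move=> hPQ; elim=> *; [apply: gL_base; exact: hPQ | exact: gL_zero | exact: gL_lin | exact: gL_br].
Qed.

Section Tri.
Variables (K : numFieldType) (U : lmodType K) (L : LL U) (L1 L0 Lm : U -> Prop).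
Hypothesis hd1 : forall x, L1 x -> dg L 1 x.
Hypothesis hd0 : forall x, L0 x -> dg L 0 x.
Hypothesis hdm : forall x, Lm x -> dg L (-1) x.
Hypothesis c01 : forall a b, L0 a -> L1 b -> L1 (bb L a b).
Hypothesis c0m : forall a b, L0 a -> Lm b -> Lm (bb L a b).
Hypothesis c00 : forall a b, L0 a -> L0 b -> L0 (bb L a b).
Hypothesis c1m : forall a b, L1 a -> Lm b -> L0 (bb L a b).
Hypothesis cm1 : forall a b, Lm a -> L1 b -> L0 (bb L a b).

Definition Lsg (s : bool) := if s then L1 else Lm.
Definition sdeg (s : bool) : int := if s then 1 else -1.

Inductive NP (s : bool) : int -> U -> Prop :=
 | NPb x : Lsg s x -> NP s (sdeg s) x
 | NPs d1 d2 x y : NP s d1 x -> NP s d2 y -> NP s (d1 + d2) (bb L x y).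

Lemma Lsg_dg s x : Lsg s x -> dg L (sdeg s) x.
Proof. by case: s => /=; [exact: hd1 | exact: hdm]. Qed.

Lemma NP_dg s d x : NP s d x -> dg L d x.
Proof.
elim=> [y hy | d1 d2 x1 x2 _ h1 _ h2]; [exact: Lsg_dg | exact: b_deg].
Qed.

Lemma NP_sign s d x : NP s d x -> if s then 1 <= d else d <= -1.
Proof. elim; case: s => //= *; lia. Qed.

Lemma NP_1 d x : NP true d x -> d = 1 -> L1 x.
Proof.
case=> [y hy _ //| d1 d2 x1 x2 h1 h2].
have := NP_sign h1; have := NP_sign h2 => /= *; lia.
Qed.

Lemma NP_m1 d x : NP false d x -> d = -1 -> Lm x.
Proof.
case=> [y hy _ //| d1 d2 x1 x2 h1 h2].
have := NP_sign h1; have := NP_sign h2 => /= *; lia.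
Qed.

Lemma K1 s d a b : L0 a -> NP s d b -> spn (NP s d) (bb L a b).
Proof.
move=> ha; elim=> [y hy | d1 d2 x y hx IHx hy IHy].
- by apply: spnB; apply: NPb; case: s hy => /= ?; [exact: c01 | exact: c0m].
- rewrite (b_jac _ (hd0 ha) (NP_dg hx)) ksign0 scale1r.
  have hNP : forall p q, NP s d1 p -> NP s d2 q -> spn (NP s (d1 + d2)) (bb L p q).
    by move=> p q hp hq; apply: spnB; exact: NPs.
  apply: spnD.
  + exact: (spn_br hNP IHx (spnB hy)).
  + exact: (spn_br hNP (spnB hx) IHy).
Qed.

Lemma K1' s d a b : L0 a -> NP s d b -> spn (NP s d) (bb L b a).
Proof.
move=> ha hb; rewrite (b_anti (NP_dg hb) (hd0 ha)); apply: spnN; apply: spnZ.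
exact: K1.
Qed.

Definition Asub s d x := NP s d x \/ (d = 0 /\ L0 x).

Lemma A_br s i j a b : Asub s i a -> Asub s j b -> spn (Asub s (i + j)) (bb L a b).
Proof.
case=> [ha|[-> ha]] [hb|[-> hb]].
- by apply: spnB; left; exact: NPs.
- rewrite addr0; apply: (spn_mono (S := NP s i)); first by move=> y; left.
  exact: K1'.
- rewrite add0r; apply: (spn_mono (S := NP s j)); first by move=> y; left.
  exact: K1.
- by apply: spnB; right; split => //; exact: c00.
Qed.

Lemma A_br_span s i j x y : spn (Asub s i) x -> spn (Asub s j) y ->
  spn (Asub s (i + j)) (bb L x y).
Proof. by apply: spn_br => a b; exact: A_br. Qed.

Lemma K2 s d a b : Lsg (~~ s) a -> NP s d b -> spn (Asub s (sdeg (~~ s) + d)) (bb L a b).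
Proof.
move=> ha; elim=> [y hy | d1 d2 x y hx IHx hy IHy].
- have -> : sdeg (~~ s) + sdeg s = 0 by case: s ha hy.
  apply: spnB; right; split => //.
  by case: s ha hy => /= ??; [exact: cm1 | exact: c1m].
- rewrite (b_jac _ (Lsg_dg ha) (NP_dg hx)); apply: spnD.
  + rewrite addrA; apply: A_br_span => //; apply: spnB; by left.
  + apply: spnZ; rewrite addrCA; apply: A_br_span => //; apply: spnB; by left.
Qed.

Definition Piece d x := NP true d x \/ NP false d x \/ (d = 0 /\ L0 x).

Lemma NP_Piece s d x : NP s d x -> Piece d x.
Proof. by case: s => h; [left | right; left]. Qed.

Lemma PieceS s d x : Piece d x -> NP s d x \/ NP (~~ s) d x \/ (d = 0 /\ L0 x).
Proof. by case: s => /=; rewrite /Piece; tauto. Qed.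

Lemma Asub_Piece s d x : Asub s d x -> Piece d x.
Proof. case=> [h|h]; [exact: (NP_Piece h) | by right; right]. Qed.

Lemma K4 s i j a b : NP (~~ s) i a -> NP s j b -> spn (Piece (i + j)) (bb L a b).
Proof.
move=> ha; elim: ha j b => [x hx | i1 i2 a1 a2 h1 IH1 h2 IH2] j b hb.
- by apply: (spn_mono (S := Asub s (sdeg (~~ s) + j))); [exact: Asub_Piece | exact: K2].
- have P1 : forall i0 a0, NP (~~ s) i0 a0 ->
    (forall j b, NP s j b -> spn (Piece (i0 + j)) (bb L a0 b)) ->
    forall k c, spn (Piece k) c -> spn (Piece (i0 + k)) (bb L a0 c).
    move=> i0 a0 h0 IH0 k c hc.
    apply: (spn_br (L := L) (S := fun x => x = a0) (T := Piece k)) => //; last exact: spnB.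
    move=> p q -> /(PieceS s) [hq|[hq|[-> hq]]].
    + exact: IH0.
    + by apply: spnB; exact: (NP_Piece (NPs h0 hq)).
    + rewrite addr0; apply: (spn_mono (S := NP (~~ s) i0)); first exact: NP_Piece.
      exact: K1'.
  have hj := b_jac b (NP_dg h1) (NP_dg h2).
  have -> : bb L (bb L a1 a2) b =
      bb L a1 (bb L a2 b) - ksign K i1 i2 *: bb L a2 (bb L a1 b) by rewrite hj addrK.
  apply: spnBB.
  + by rewrite -addrA; apply: P1 => //; exact: IH2.
  + apply: spnZ; rewrite -addrA addrCA; apply: P1 => //; exact: IH1.
Qed.

Lemma Piece_br i j a b : Piece i a -> Piece j b -> spn (Piece (i + j)) (bb L a b).
Proof.
case=> [ha|[ha|[-> ha]]] [hb|[hb|[-> hb]]].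
- by apply: spnB; exact: (NP_Piece (NPs ha hb)).
- exact: (@K4 false).
- by rewrite addr0; apply: (spn_mono (S := NP true i)); [exact: NP_Piece | exact: K1'].
- exact: (@K4 true).
- by apply: spnB; exact: (NP_Piece (NPs ha hb)).
- by rewrite addr0; apply: (spn_mono (S := NP false i)); [exact: NP_Piece | exact: K1'].
- by rewrite add0r; apply: (spn_mono (S := NP true j)); [exact: NP_Piece | exact: K1].
- by rewrite add0r; apply: (spn_mono (S := NP false j)); [exact: NP_Piece | exact: K1].
- by apply: spnB; right; right; split => //; exact: c00.
Qed.

Definition Ldeg x := L1 x \/ L0 x \/ Lm x.

Definition decP (z : U) := exists s : seq (int * U),
  (forall p, p \in s -> spn (Piece p.1) p.2) /\ z = \sum_(p <- s) p.2.

Lemma gen_dec z : genL L Ldeg z -> decP z.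
Proof.
elim=> [x hx | | a x y _ [s1 [h1 ->]] _ [s2 [h2 ->]] | x y _ [s1 [h1 ->]] _ [s2 [h2 ->]]].
- case: hx => [hx|[hx|hx]].
  + exists [:: (1, x)]; split; last by rewrite big_seq1.
    by move=> p; rewrite mem_seq1 => /eqP -> /=; apply: spnB; exact: (NP_Piece (@NPb true _ hx)).
  + exists [:: (0, x)]; split; last by rewrite big_seq1.
    by move=> p; rewrite mem_seq1 => /eqP -> /=; apply: spnB; right; right.
  + exists [:: (-1, x)]; split; last by rewrite big_seq1.
    by move=> p; rewrite mem_seq1 => /eqP -> /=; apply: spnB; exact: (NP_Piece (@NPb false _ hx)).
- by exists [::]; rewrite big_nil.
- exists ([seq (p.1, a *: p.2) | p <- s1] ++ s2); split.
  + move=> p; rewrite mem_cat => /orP[/mapP[q qs ->] /=|]; last exact: h2.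
    exact/spnZ/h1.
  + by rewrite big_cat big_map /= scaler_sumr.
- exists [seq (p.1 + q.1, bb L p.2 q.2) | p <- s1, q <- s2]; split.
  + move=> p /allpairsP [[p1 q1] [/= hp hq ->]] /=.
    apply: spn_br; [exact: Piece_br | exact: h1 | exact: h2].
  + rewrite big_allpairs_dep /= bb_suml; apply: eq_bigr => p _.
    by rewrite bb_sumr.
Qed.

Lemma Piece_dg d x : Piece d x -> dg L d x.
Proof. by case=> [h|[h|[-> h]]]; [exact: (NP_dg h) | exact: (NP_dg h) | exact: hd0]. Qed.

Lemma spnPiece_dg d x : spn (Piece d) x -> dg L d x.
Proof.
apply: spn_sub; [exact: dg0 | move=> *; exact: dgD | exact: Piece_dg].
Qed.

Lemma dec_homog z e : indepL L -> decP z -> dg L e z -> spn (Piece e) z.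
Proof.
move=> hind [s [hs hz]] he.
have hdg : forall p, p \in s -> dg L p.1 p.2 by move=> p /hs; exact: spnPiece_dg.
have := gsum_homog hind hdg he hz e; rewrite eqxx => <-.
rewrite /gsum big_seq_cond; apply: spn_sum => p /andP[/hs + /eqP <-] //.
Qed.

Lemma Piece_1 x : Piece 1 x -> L1 x.
Proof.
case=> [h|[h|[h _]]]; [exact: NP_1 h _ | have := NP_sign h => /=; lia | by []].
Qed.
Lemma Piece_0 x : Piece 0 x -> L0 x.
Proof.
case=> [h|[h|[_ h]]] //; have := NP_sign h => /=; lia.
Qed.
Lemma Piece_m1 x : Piece (-1) x -> Lm x.
Proof.
case=> [h|[h|[h _]]]; [have := NP_sign h => /=; lia | exact: NP_m1 h _ | by []].
Qed.
Lemma Piece_neg e x : e <= -1 -> Piece e x -> NP false e x.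
Proof.
move=> he [h|[h|[h _]]] //; [have := NP_sign h => /=; lia | lia].
Qed.
Lemma Piece_pos e x : 1 <= e -> Piece e x -> NP true e x.
Proof.
move=> he [h|[h|[h _]]] //; [have := NP_sign h => /=; lia | lia].
Qed.


Lemma Piece_gen d x : spn (Piece d) x -> genL L Ldeg x.
Proof.
have hNP : forall s d y, NP s d y -> genL L Ldeg y.
  move=> s0 d0 y; elim=> [z hz | d1 d2 x1 x2 _ h1 _ h2]; last exact: gL_br.
  by apply: gL_base; case: s0 hz => /= hz; rewrite /Ldeg; tauto.
apply: spn_sub; [exact: gL_zero | move=> *; exact: gL_lin |].
move=> y [h|[h|[_ h]]]; [exact: hNP h | exact: hNP h |].
by apply: gL_base; rewrite /Ldeg; tauto.
Qed.

Lemma tri_main z e : indepL L -> genL L Ldeg z -> dg L e z -> spn (Piece e) z.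
Proof. by move=> hind hz he; apply: dec_homog => //; exact: gen_dec. Qed.

Lemma tri_1 z : indepL L -> L1 0 -> (forall a x y, L1 x -> L1 y -> L1 (a *: x + y)) ->
  genL L Ldeg z -> dg L 1 z -> L1 z.
Proof.
move=> hind h0 hl hz he; have := tri_main hind hz he.
apply: spn_sub => //; exact: Piece_1.
Qed.
Lemma tri_0 z : indepL L -> L0 0 -> (forall a x y, L0 x -> L0 y -> L0 (a *: x + y)) ->
  genL L Ldeg z -> dg L 0 z -> L0 z.
Proof.
move=> hind h0 hl hz he; have := tri_main hind hz he.
apply: spn_sub => //; exact: Piece_0.
Qed.
Lemma tri_m1 z : indepL L -> Lm 0 -> (forall a x y, Lm x -> Lm y -> Lm (a *: x + y)) ->
  genL L Ldeg z -> dg L (-1) z -> Lm z.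
Proof.
move=> hind h0 hl hz he; have := tri_main hind hz he.
apply: spn_sub => //; exact: Piece_m1.
Qed.
Lemma tri_neg z e : indepL L -> genL L Ldeg z -> dg L e z -> e <= -1 -> spn (NP false e) z.
Proof.
move=> hind hz he hle; have := tri_main hind hz he.
apply: spn_mono => y; exact: Piece_neg.
Qed.
Lemma tri_pos z e : indepL L -> genL L Ldeg z -> dg L e z -> 1 <= e -> spn (NP true e) z.
Proof.
move=> hind hz he hle; have := tri_main hind hz he.
apply: spn_mono => y; exact: Piece_pos.
Qed.
End Tri.

Section Inst.
Variables (K : numFieldType).

Definition LLG (V : lmodType K) (G : LieSA V) : LL V :=
  @MkLL K V (deg G) (br G) (@deg0 _ _ G) (@degD _ _ G) (@brDl _ _ G) (@brDr _ _ G)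
    (@br_deg _ _ G) (@br_anti _ _ G) (@br_jacobi _ _ G).

Lemma LLG_indep (V : lmodType K) (G : LieSA V) : indepL (LLG G).
Proof. move=> s c us hc hs; exact: (@deg_indep _ _ G s c us hc hs). Qed.

Lemma gen_genL (V : lmodType K) (G : LieSA V) P v : generated G P v -> genL (LLG G) P v.
Proof. elim=> *; [exact: gL_base | exact: gL_zero | exact: gL_lin | exact: gL_br]. Qed.

Lemma br0l (V : lmodType K) (G : LieSA V) z : br G 0 z = 0.
Proof. exact: (bb0l (LLG G) z). Qed.
Lemma br0r (V : lmodType K) (G : LieSA V) z : br G z 0 = 0.
Proof. exact: (bb0r (LLG G) z). Qed.
Lemma brBr (V : lmodType K) (G : LieSA V) x y z : br G z (x - y) = br G z x - br G z y.
Proof. exact: (bbBr (LLG G)). Qed.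
Lemma brBl (V : lmodType K) (G : LieSA V) x y z : br G (x - y) z = br G x z - br G y z.
Proof. exact: (bbBl (LLG G)). Qed.
Lemma brDr1 (V : lmodType K) (G : LieSA V) x y z : br G z (x + y) = br G z x + br G z y.
Proof. exact: (bbDr (LLG G)). Qed.
Lemma brDl1 (V : lmodType K) (G : LieSA V) x y z : br G (x + y) z = br G x z + br G y z.
Proof. exact: (bbDl (LLG G)). Qed.
Lemma brZr (V : lmodType K) (G : LieSA V) a x z : br G z (a *: x) = a *: br G z x.
Proof. exact: (bbZr (LLG G)). Qed.
Lemma brZl (V : lmodType K) (G : LieSA V) a x z : br G (a *: x) z = a *: br G x z.
Proof. exact: (bbZl (LLG G)). Qed.
Lemma br_sumr (V : lmodType K) (G : LieSA V) (I : Type) (r : seq I) (P : pred I) (F : I -> V) z :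
  br G z (\sum_(i <- r | P i) F i) = \sum_(i <- r | P i) br G z (F i).
Proof. exact: (bb_sumr (LLG G)). Qed.
Lemma br_suml (V : lmodType K) (G : LieSA V) (I : Type) (r : seq I) (P : pred I) (F : I -> V) z :
  br G (\sum_(i <- r | P i) F i) z = \sum_(i <- r | P i) br G (F i) z.
Proof. exact: (bb_suml (LLG G)). Qed.

Variables (W V : lmodType K) (H : LieSA W) (G : LieSA V).

Definition dgP k (p : W * V) := deg H k p.1 /\ deg G k p.2.
Definition bbP (p q : W * V) : W * V := (br H p.1 q.1, br G p.2 q.2).

Lemma fst_sum (I : Type) (r : seq I) (P : pred I) (F : I -> W * V) :
  (\sum_(i <- r | P i) F i).1 = \sum_(i <- r | P i) (F i).1.
Proof. by apply: (big_morph fst). Qed.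
Lemma snd_sum (I : Type) (r : seq I) (P : pred I) (F : I -> W * V) :
  (\sum_(i <- r | P i) F i).2 = \sum_(i <- r | P i) (F i).2.
Proof. by apply: (big_morph snd). Qed.

Definition LLP : LL [the lmodType K of (W * V)%type].
refine (@MkLL K _ dgP bbP _ _ _ _ _ _ _).
- by move=> k; split; exact: deg0.
- by move=> k a x y [hx1 hx2] [hy1 hy2]; split; apply: degD.
- by move=> a x y z; rewrite /bbP /= !brDl.
- by move=> a x y z; rewrite /bbP /= !brDr.
- by move=> i j x y [hx1 hx2] [hy1 hy2]; split; apply: br_deg.
- move=> i j x y [hx1 hx2] [hy1 hy2]; rewrite /bbP.
  by rewrite (br_anti hx1 hy1) (br_anti hx2 hy2).
- move=> i j x y z [hx1 hx2] [hy1 hy2]; rewrite /bbP /=.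
  by rewrite (br_jacobi _ hx1 hy1) (br_jacobi _ hx2 hy2).
Defined.

Lemma LLP_indep : indepL LLP.
Proof.
move=> s c us hc hs k ks.
have h1 := @deg_indep _ _ H s (fun k => (c k).1) us (fun k kin => (hc k kin).1).
have h2 := @deg_indep _ _ G s (fun k => (c k).2) us (fun k kin => (hc k kin).2).
rewrite -fst_sum hs in h1; rewrite -snd_sum hs in h2.
by case: (c k) (h1 erefl k ks) (h2 erefl k ks) => /= ?? -> ->.
Qed.
End Inst.

Section GenG.
Variables (K : numFieldType) (V : lmodType K) (G : LieSA V).
Hypothesis hG : locally_generated G.

Lemma genG z : genL (LLG G) (Ldeg (deg G 1) (deg G 0) (deg G (-1))) z.
Proof.
apply: (genL_mono (P := local_hom G)); last exact: gen_genL.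
by move=> y; rewrite /local_hom /Ldeg; tauto.
Qed.

Let hd1 : forall x, deg G 1 x -> dg (LLG G) 1 x. Proof. by []. Qed.
Let hd0 : forall x, deg G 0 x -> dg (LLG G) 0 x. Proof. by []. Qed.
Let hdm : forall x, deg G (-1) x -> dg (LLG G) (-1) x. Proof. by []. Qed.
Let c01 : forall a b, deg G 0 a -> deg G 1 b -> deg G 1 (bb (LLG G) a b).
Proof. by move=> a b ha hb; have := br_deg ha hb; rewrite add0r. Qed.
Let c0m : forall a b, deg G 0 a -> deg G (-1) b -> deg G (-1) (bb (LLG G) a b).
Proof. by move=> a b ha hb; have := br_deg ha hb; rewrite add0r. Qed.
Let c00 : forall a b, deg G 0 a -> deg G 0 b -> deg G 0 (bb (LLG G) a b).
Proof. by move=> a b ha hb; have := br_deg ha hb; rewrite add0r. Qed.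
Let c1m : forall a b, deg G 1 a -> deg G (-1) b -> deg G 0 (bb (LLG G) a b).
Proof. by move=> a b ha hb; have := br_deg ha hb; rewrite addrN. Qed.
Let cm1 : forall a b, deg G (-1) a -> deg G 1 b -> deg G 0 (bb (LLG G) a b).
Proof. by move=> a b ha hb; have := br_deg ha hb; rewrite addNr. Qed.

Lemma kill_gen (s : bool) y :
  (forall z, deg G (if s then 1 else -1) z -> br G z y = 0) ->
  forall e z, (if s then 1 <= e else e <= -1) -> deg G e z -> br G z y = 0.
Proof.
move=> h0 e z he hz.
have hNP : forall d w, NP (LLG G) (deg G 1) (deg G (-1)) s d w -> br G w y = 0.
  move=> d w; elim=> [x hx | d1 d2 x1 x2 h1 IH1 h2 IH2].
    by move: (h0 x); case: s {h0 he} hx => hx ->.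
  have hj := br_jacobi y (NP_dg hd1 hdm h1) (NP_dg hd1 hdm h2).
  have -> : br G (br G x1 x2) y =
      br G x1 (br G x2 y) - ksign K d1 d2 *: br G x2 (br G x1 y) by rewrite hj addrK.
  by rewrite IH1 IH2 !br0r scaler0 subr0.
have : spn (NP (LLG G) (deg G 1) (deg G (-1)) s e) z.
  case: s h0 he {hNP} => h0 he.
  - exact: (tri_pos hd1 hd0 hdm c01 c0m c00 c1m cm1 (@LLG_indep K V G) (genG z) hz he).
  - exact: (tri_neg hd1 hd0 hdm c01 c0m c00 c1m cm1 (@LLG_indep K V G) (genG z) hz he).
apply: (spn_sub (T := fun w => br G w y = 0)).
- exact: br0l.
- by move=> a x1 x2 h1 h2; rewrite (brDl G) h1 h2 scaler0 addr0.
- move=> w; exact: hNP.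
Qed.
End GenG.

Section PartB.
Variables (K : numFieldType) (W V : lmodType K) (H : LieSA W) (G : LieSA V) (f : W -> V).
Hypothesis hf : local_iso H G f.
Hypothesis hH : locally_generated H.
Hypothesis hG : locally_generated G.

Let f_deg k x : is_local_deg k -> deg H k x -> deg G k (f x).
Proof. by move=> hk hx; case: hf => h _; exact: h k hk x hx. Qed.
Let f_lin k a x y : is_local_deg k -> deg H k x -> deg H k y -> f (a *: x + y) = a *: f x + f y.
Proof. by move=> hk hx hy; case: hf => _ [h _]; exact: h k hk a x y hx hy. Qed.
Let f_surj k y : is_local_deg k -> deg G k y -> exists2 x, deg H k x & f x = y.
Proof. by move=> hk hy; case: hf => _ [_ [_ [h _]]]; exact: h k hk y hy. Qed.
Let f_br i j x y : is_local_deg i -> is_local_deg j -> is_local_deg (i + j) ->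
  deg H i x -> deg H j y -> f (br H x y) = br G (f x) (f y).
Proof. by move=> hi hj hij hx hy; case: hf => _ [_ [_ [_ h]]]; exact: h i j hi hj hij x y hx hy. Qed.

Let f0 : f 0 = 0.
Proof.
have := @f_lin 0 1 0 0 erefl (deg0 H 0) (deg0 H 0); rewrite !scale1r addr0 => h.
by move/(congr1 (fun t => t - f 0)): h; rewrite addrK subrr => /esym.
Qed.

Definition Lk (k : int) (p : W * V) := deg H k p.1 /\ p.2 = f p.1.

Let LP := LLP H G.

Let Lk_dg k p : is_local_deg k -> Lk k p -> dg LP k p.
Proof. by move=> hk [h1 h2]; split => //; rewrite h2; exact: f_deg. Qed.
Let Lk_0 k : is_local_deg k -> Lk k 0.
Proof. by move=> hk; split; [exact: deg0 | rewrite /= f0]. Qed.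
Let Lk_lin k a p q : is_local_deg k -> Lk k p -> Lk k q -> Lk k (a *: p + q).
Proof.
move=> hk [hp1 hp2] [hq1 hq2]; split; first exact: degD.
by rewrite /= (@f_lin k) // hp2 hq2.
Qed.
Let Lk_br i j p q : is_local_deg i -> is_local_deg j -> is_local_deg (i + j) ->
  Lk i p -> Lk j q -> Lk (i + j) (bb LP p q).
Proof.
move=> hi hj hij [hp1 hp2] [hq1 hq2]; split; first exact: br_deg.
by rewrite /= (f_br hi hj hij hp1 hq1) hp2 hq2.
Qed.

Let hd1 : forall x, Lk 1 x -> dg LP 1 x. Proof. by move=> x; apply: Lk_dg. Qed.
Let hd0 : forall x, Lk 0 x -> dg LP 0 x. Proof. by move=> x; apply: Lk_dg. Qed.
Let hdm : forall x, Lk (-1) x -> dg LP (-1) x. Proof. by move=> x; apply: Lk_dg. Qed.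
Let c01 : forall a b, Lk 0 a -> Lk 1 b -> Lk 1 (bb LP a b).
Proof. by move=> a b ha hb; have := @Lk_br (0) (1) a b isT isT isT ha hb; rewrite add0r. Qed.
Let c0m : forall a b, Lk 0 a -> Lk (-1) b -> Lk (-1) (bb LP a b).
Proof. by move=> a b ha hb; have := @Lk_br (0) (-1) a b isT isT isT ha hb; rewrite add0r. Qed.
Let c00 : forall a b, Lk 0 a -> Lk 0 b -> Lk 0 (bb LP a b).
Proof. by move=> a b ha hb; have := @Lk_br (0) (0) a b isT isT isT ha hb; rewrite add0r. Qed.
Let c1m : forall a b, Lk 1 a -> Lk (-1) b -> Lk 0 (bb LP a b).
Proof. by move=> a b ha hb; have := @Lk_br (1) (-1) a b isT isT isT ha hb; rewrite addrN. Qed.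
Let cm1 : forall a b, Lk (-1) a -> Lk 1 b -> Lk 0 (bb LP a b).
Proof. by move=> a b ha hb; have := @Lk_br (-1) (1) a b isT isT isT ha hb; rewrite addNr. Qed.

Definition Gam := genL LP (Ldeg (Lk 1) (Lk 0) (Lk (-1))).

Let Gam_add p q : Gam p -> Gam q -> Gam (p + q).
Proof. by move=> hp hq; have := gL_lin 1 hp hq; rewrite scale1r. Qed.
Let Gam_sub p q : Gam p -> Gam q -> Gam (p - q).
Proof. by move=> hp hq; have := gL_lin (-1) hq hp; rewrite scaleN1r addrC. Qed.

Let Gam_local x : local_hom H x -> Gam (x, f x).
Proof.
move=> hx; apply: gL_base; rewrite /Ldeg /Lk /=.
by case: hx => [h|[h|h]]; [right; right | right; left | left].
Qed.

Let Gam_fst w : exists y, Gam (w, y).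
Proof.
elim: (hH w) => [x hx | | a x1 x2 _ [y1 h1] _ [y2 h2] | x1 x2 _ [y1 h1] _ [y2 h2]].
- by exists (f x); exact: Gam_local.
- by exists 0; exact: gL_zero.
- by exists (a *: y1 + y2); exact: (gL_lin a h1 h2).
- by exists (br G y1 y2); exact: (gL_br h1 h2).
Qed.

Let Gam_snd v : exists x, Gam (x, v).
Proof.
elim: (hG v) => [y hy | | a x1 x2 _ [y1 h1] _ [y2 h2] | x1 x2 _ [y1 h1] _ [y2 h2]].
- have [k hk hyk] : exists2 k, is_local_deg k & deg G k y.
    by case: hy => [h|[h|h]]; [exists (-1) | exists 0 | exists 1].
  have [x hx <-] := f_surj hk hyk; exists x; apply: Gam_local.
  by move: hk => /orP[/orP[/eqP ek|/eqP ek]|/eqP ek]; rewrite /local_hom -ek; tauto.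
- by exists 0; exact: gL_zero.
- by exists (a *: y1 + y2); exact: (gL_lin a h1 h2).
- by exists (br H y1 y2); exact: (gL_br h1 h2).
Qed.

Let Gam_ideal y v : Gam (0, y) -> Gam (0, br G v y).
Proof.
move=> hy; have [x hx] := Gam_snd v.
have -> : ((0 : W), br G v y) = bb LP (x, v) (0, y) by rewrite /LP /LLP /= /bbP /= br0r.
exact: gL_br.
Qed.

Let Gam_hloc y k : Gam (0, y) -> deg G k y -> is_local_deg k -> y = 0.
Proof.
move=> hg hk /orP[/orP[/eqP ek|/eqP ek]|/eqP ek]; subst k.
- have := tri_m1 hd1 hd0 hdm c01 c0m c00 c1m cm1 (@LLP_indep _ _ _ H G) (@Lk_0 (-1) isT)
    (fun a x y => @Lk_lin (-1) a x y isT) hg (conj (deg0 H _) hk).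
  by case=> _ /= ->; rewrite f0.
- have := tri_0 hd1 hd0 hdm c01 c0m c00 c1m cm1 (@LLP_indep _ _ _ H G) (@Lk_0 0 isT)
    (fun a x y => @Lk_lin 0 a x y isT) hg (conj (deg0 H _) hk).
  by case=> _ /= ->; rewrite f0.
- have := tri_1 hd1 hd0 hdm c01 c0m c00 c1m cm1 (@LLP_indep _ _ _ H G) (@Lk_0 1 isT)
    (fun a x y => @Lk_lin 1 a x y isT) hg (conj (deg0 H _) hk).
  by case=> _ /= ->; rewrite f0.
Qed.


Let single_span (P : int -> bool) d y : deg G d y -> P d -> in_graded_span G P y.
Proof.
move=> hy hP; exists [:: d], (fun k => if k == d then y else 0); split.
- by move=> k; rewrite mem_seq1 => /eqP ->.
- split; first by move=> k; case: eqP => [->|_]; [exact: hy | exact: deg0].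
  by rewrite big_seq1 eqxx.
Qed.

Let far_finish (s : bool) (n : nat) y d :
  (if s then neg_transitive G 2 else pos_transitive G (-2)) ->
  d = (if s then n%:Z + 2 else - (n%:Z + 2)) -> deg G d y ->
  (forall z, deg G (if ~~ s then 1 else -1) z -> br G z y = 0) -> y = 0.
Proof.
move=> ht hd hy kill1; have kill := kill_gen hG kill1.
case: s ht hd kill {kill1} => /= ht hd kill.
- apply: ht; first by apply: (single_span hy); lia.
  by move=> k z hk hz; apply: (kill (- k)) => //; lia.
- apply: ht; first by apply: (single_span hy); lia.
  by move=> k z hk hz; apply: (kill k).
Qed.

Let Gam_far (s : bool) : (if s then neg_transitive G 2 else pos_transitive G (-2)) ->
  forall (n : nat) y d, d = (if s then n%:Z + 2 else - (n%:Z + 2)) -> deg G d y ->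
  Gam (0, y) -> y = 0.
Proof.
move=> ht n; elim: n => [|n IH] y d hd hy hg.
- apply: (far_finish ht hd hy) => z hz.
  have hzy := br_deg hz hy; apply: (Gam_hloc (Gam_ideal z hg) hzy).
  by case: s ht hd hz hzy => _ -> /=.
- apply: (far_finish ht hd hy) => z hz.
  have hzy := br_deg hz hy; apply: (IH _ _ _ hzy (Gam_ideal z hg)).
  by move: IH; case: s ht hd hz hzy => _ -> /= *; lia.
Qed.


Let Gam_hom y D : mn_transitive G (-2) 2 -> deg G D y -> Gam (0, y) -> y = 0.
Proof.
move=> [hp hn] hw hgw.
case: (boolP (is_local_deg D)) => hl; first exact: (Gam_hloc hgw hw hl).
have : (2 <= D) \/ (D <= -2) by move: hl; rewrite /is_local_deg; lia.
case=> hD.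
- have [n en] : exists n : nat, D = n%:Z + 2 by exists (absz D - 2)%N; lia.
  exact: (@Gam_far true hn n y D en hw hgw).
- have [n en] : exists n : nat, D = - (n%:Z + 2) by exists (absz D - 2)%N; lia.
  exact: (@Gam_far false hp n y D en hw hgw).
Qed.

Let hdgs (s : seq (int * (W * V))) :
  (forall p, p \in s -> spn (Piece LP (Lk 1) (Lk 0) (Lk (-1)) p.1) p.2) ->
  forall p, p \in s -> dg LP p.1 p.2.
Proof. by move=> hs p hp; exact: (spnPiece_dg hd1 hd0 hdm (hs p hp)). Qed.

Let Gam_gsum (s : seq (int * (W * V))) D :
  (forall p, p \in s -> spn (Piece LP (Lk 1) (Lk 0) (Lk (-1)) p.1) p.2) -> Gam (gsum s D).
Proof.
move=> hs; rewrite /gsum big_seq_cond; apply: (big_ind Gam).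
- exact: gL_zero.
- exact: Gam_add.
- by move=> p /andP[hp _]; exact: (Piece_gen (hs p hp)).
Qed.

Lemma Gam_zero y : mn_transitive G (-2) 2 -> Gam (0, y) -> y = 0.
Proof.
move=> ht hg.
have [s [hs hsum]] := gen_dec hd1 hd0 hdm c01 c0m c00 c1m cm1 hg.
have -> : y = \sum_(q <- [seq (p.1, p.2.2) | p <- s]) q.2.
  by rewrite big_map /= -snd_sum -hsum.
apply: (sum_groups (S := fun v => v = 0)) => //; first by move=> ?? -> ->; rewrite addr0.
move=> D.
have gP := Gam_gsum D hs.
have dP := gsum_dg D (hdgs hs).
have P1 : (gsum s D).1 = 0.
  have h0 : gsum [seq (p.1, p.2.1) | p <- s] D = 0.
    apply: (gsum_zero (@LLG_indep _ _ H)).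
    - by move=> q /mapP[p hp ->] /=; exact: (hdgs hs hp).1.
    - by rewrite big_map /= -fst_sum -hsum.
  by move: h0; rewrite /gsum big_map /= fst_sum.
have -> : gsum [seq (p.1, p.2.2) | p <- s] D = (gsum s D).2.
  by rewrite /gsum snd_sum big_map.
apply: (Gam_hom ht dP.2).
by move: gP P1; case: (gsum s D) => a b /= gab ea; rewrite ea in gab.
Qed.


Lemma partB : mn_transitive G (-2) 2 ->
  exists g : W -> V, lie_morphism H G g /\ (forall x, local_hom H x -> g x = f x).
Proof.
move=> ht.
have guniq : forall w y1 y2, Gam (w, y1) -> Gam (w, y2) -> y1 = y2.
  move=> w y1 y2 h1 h2; have := Gam_sub h1 h2.
  have -> : ((w, y1) - (w, y2) : W * V) = (0, y1 - y2).
    by rewrite [LHS]surjective_pairing; congr pair; exact: subrr.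
  by move/(Gam_zero ht)/eqP; rewrite subr_eq0 => /eqP.
pose g w := epsilon (inhabits 0) (fun y => Gam (w, y)).
have gG : forall w, Gam (w, g w) := fun w => epsilon_spec (inhabits 0) _ (Gam_fst w).
exists g; split; [split; [|split]|].
- move=> a x y; apply: (guniq (a *: x + y)); first exact: gG.
  exact: (gL_lin a (gG x) (gG y)).
- move=> k x hx.
  have [s [hs hsum]] := gen_dec hd1 hd0 hdm c01 c0m c00 c1m cm1 (gG x).
  have e1 : gsum [seq (p.1, p.2.1) | p <- s] k = x.
    have := @gsum_homog _ _ (LLG H) (@LLG_indep _ _ H) [seq (p.1, p.2.1) | p <- s] k x _ hx _ k.
    rewrite eqxx; apply.
    - by move=> q /mapP[p hp ->] /=; exact: (hdgs hs hp).1.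
    - by rewrite big_map /= -fst_sum -hsum.
  have gk : Gam (x, (gsum s k).2).
    have := Gam_gsum k hs; move: e1; rewrite /gsum big_map /= -fst_sum.
    by case: (\sum_(i <- s | i.1 == k) i.2) => a b /= ->.
  rewrite (guniq _ _ _ (gG x) gk); exact: (gsum_dg k (hdgs hs)).2.
- by move=> x y; apply: (guniq _ _ _ (gG _)); exact: (gL_br (gG x) (gG y)).
- by move=> x hx; apply: (guniq _ _ _ (gG x)); exact: Gam_local.
Qed.

End PartB.

Section Quot.
Variables (K : numFieldType) (V : lmodType K) (I : V -> Prop).
Local Open Scope quotient_scope.
Hypothesis I0 : I 0.
Hypothesis Ilin : forall a x y, I x -> I y -> I (a *: x + y).

Definition Ib (x : V) : bool := if excluded_middle_informative (I x) then true else false.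
Lemma IbP x : reflect (I x) (Ib x).
Proof. by rewrite /Ib; case: excluded_middle_informative => h; constructor. Qed.

Lemma I_add x y : I x -> I y -> I (x + y).
Proof. by move=> hx hy; have := Ilin 1 hx hy; rewrite scale1r. Qed.
Lemma I_scale a x : I x -> I (a *: x).
Proof. by move=> hx; have := Ilin a hx I0; rewrite addr0. Qed.
Lemma I_opp x : I x -> I (- x).
Proof. by move=> hx; rewrite -scaleN1r; exact: I_scale. Qed.
Lemma I_sub x y : I x -> I y -> I (x - y).
Proof. by move=> hx hy; apply: I_add => //; exact: I_opp. Qed.

Definition er (x y : V) := Ib (x - y).
Lemma er_refl : reflexive er.
Proof. by move=> x; apply/IbP; rewrite subrr. Qed.
Lemma er_sym : symmetric er.
Proof.
move=> x y; apply/IbP/IbP => h; have := I_opp h; by rewrite opprB.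
Qed.
Lemma er_trans : transitive er.
Proof.
move=> y x z /IbP h1 /IbP h2; apply/IbP.
by have := I_add h1 h2; rewrite addrA subrK.
Qed.
Canonical erel := EquivRel er er_refl er_sym er_trans.

Definition Q := {eq_quot erel}.
Definition pi (x : V) : Q := \pi_Q x.

Lemma piP x y : pi x = pi y <-> I (x - y).
Proof.
split; first by move/eqquotP/IbP.
by move=> h; apply/eqquotP/IbP.
Qed.

Lemma pi_repr (q : Q) : pi (repr q) = q.
Proof. exact: reprK. Qed.
Lemma repr_pi x : I (repr (pi x) - x).
Proof. by apply/piP; rewrite pi_repr. Qed.

Definition zeroQ : Q := pi 0.
Definition oppQ (q : Q) : Q := pi (- repr q).
Definition addQ (q1 q2 : Q) : Q := pi (repr q1 + repr q2).
Definition scaleQ (a : K) (q : Q) : Q := pi (a *: repr q).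

Lemma addQ_pi x y : addQ (pi x) (pi y) = pi (x + y).
Proof.
apply/piP; have := I_add (repr_pi x) (repr_pi y).
by congr I; rewrite opprD addrACA.
Qed.
Lemma oppQ_pi x : oppQ (pi x) = pi (- x).
Proof. by apply/piP; have := I_opp (repr_pi x); rewrite opprB opprK addrC. Qed.
Lemma scaleQ_pi a x : scaleQ a (pi x) = pi (a *: x).
Proof. by apply/piP; have := I_scale a (repr_pi x); rewrite scalerBr. Qed.

Lemma addQA : associative addQ.
Proof.
move=> q1 q2 q3; rewrite -[q1]pi_repr -[q2]pi_repr -[q3]pi_repr.
by rewrite !addQ_pi addrA.
Qed.
Lemma addQC : commutative addQ.
Proof.
move=> q1 q2; rewrite -[q1]pi_repr -[q2]pi_repr.
by rewrite !addQ_pi addrC.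
Qed.
Lemma add0Q : left_id zeroQ addQ.
Proof. by move=> q; rewrite -[q]pi_repr /zeroQ addQ_pi add0r. Qed.
Lemma addNQ : left_inverse zeroQ oppQ addQ.
Proof. by move=> q; rewrite -[q]pi_repr oppQ_pi addQ_pi addNr. Qed.

HB.instance Definition _ := Choice.copy Q {eq_quot erel}.
HB.instance Definition _ := GRing.isZmodule.Build Q addQA addQC add0Q addNQ.

Lemma pi_add x y : pi (x + y) = pi x + pi y.
Proof. by symmetry; exact: addQ_pi. Qed.
Lemma pi0 : pi 0 = 0.
Proof. by []. Qed.
Lemma pi_opp x : pi (- x) = - pi x.
Proof. by symmetry; exact: oppQ_pi. Qed.

Lemma scaleQA a b q : scaleQ a (scaleQ b q) = scaleQ (a * b) q.
Proof. by rewrite -[q]pi_repr !scaleQ_pi scalerA. Qed.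
Lemma scale1Q : left_id 1 scaleQ.
Proof. by move=> q; rewrite -[q]pi_repr scaleQ_pi scale1r. Qed.
Lemma scaleQDr : right_distributive scaleQ +%R.
Proof.
move=> a q1 q2; rewrite -[q1]pi_repr -[q2]pi_repr.
by rewrite -pi_add !scaleQ_pi -pi_add scalerDr.
Qed.
Lemma scaleQDl q : {morph scaleQ^~ q : a b / a + b}.
Proof.
move=> a b; rewrite -[q]pi_repr /=.
by rewrite !scaleQ_pi -pi_add scalerDl.
Qed.

HB.instance Definition _ := GRing.Zmodule_isLmodule.Build K Q scaleQA scale1Q scaleQDr scaleQDl.

Lemma pi_scale a x : pi (a *: x) = a *: pi x.
Proof. by symmetry; exact: scaleQ_pi. Qed.
Lemma pi_lin a x y : pi (a *: x + y) = a *: pi x + pi y.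
Proof. by rewrite pi_add pi_scale. Qed.
Lemma pi_sum (J : Type) (r : seq J) (P : pred J) (F : J -> V) :
  pi (\sum_(i <- r | P i) F i) = \sum_(i <- r | P i) pi (F i).
Proof. by apply: (big_morph pi); [exact: pi_add | exact: pi0]. Qed.
End Quot.


Section Quot2.
Variables (K : numFieldType) (V : lmodType K) (G : LieSA V) (I : V -> Prop).
Hypothesis I0 : I 0.
Hypothesis Ilin : forall a x y, I x -> I y -> I (a *: x + y).
Hypothesis Il : forall v y, I y -> I (br G v y).
Hypothesis Ir : forall v y, I y -> I (br G y v).
Hypothesis Igr : forall y, I y -> exists t : seq (int * V),
  (forall p, p \in t -> I p.2 /\ deg G p.1 p.2) /\ y = \sum_(p <- t) p.2.
Hypothesis Iloc : forall y k, I y -> deg G k y -> is_local_deg k -> y = 0.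
Hypothesis hG : locally_generated G.

Local Notation QQ := (Q I0 Ilin).
Local Notation pi := (pi I0 Ilin).

Definition brQ (a b : QQ) : QQ := pi (br G (repr a) (repr b)).

Lemma pi_br x y : brQ (pi x) (pi y) = pi (br G x y).
Proof.
apply/piP.
have h1 := Ir (repr (pi y)) (repr_pi I0 Ilin x).
have h2 := Il x (repr_pi I0 Ilin y).
have := I_add Ilin h1 h2.
by rewrite brBl brBr addrA subrK.
Qed.

Definition degQ k (q : QQ) := exists v, deg G k v /\ q = pi v.

Lemma I_group y u : I y -> (forall p, p \in u -> deg G p.1 p.2) -> y = \sum_(p <- u) p.2 ->
  forall D, I (gsum u D).
Proof.
move=> hy hu hsum D; have [t [ht hyt]] := Igr hy.
have h : gsum (u ++ [seq (p.1, - p.2) | p <- t]) D = 0.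
  apply: (gsum_zero (@LLG_indep _ _ G)).
  - move=> p; rewrite mem_cat => /orP[/hu //|/mapP [q /ht [_ hq] ->] /=].
    exact: (dgN (L := LLG G)).
  - by rewrite big_cat big_map /= sumrN -hsum -hyt subrr.
move: h; rewrite /gsum big_cat /= big_map /= sumrN => /eqP; rewrite subr_eq0 => /eqP ->.
rewrite big_seq_cond; apply: (big_ind I) => //; first exact: (I_add Ilin).
by move=> p /andP[/ht [] ].
Qed.

Lemma degQ0 k : degQ k 0.
Proof. by exists 0; split; [exact: deg0 | rewrite pi0]. Qed.
Lemma degQD k a x y : degQ k x -> degQ k y -> degQ k (a *: x + y).
Proof.
move=> [v [hv ->]] [w [hw ->]]; exists (a *: v + w); split; [exact: degD | by rewrite pi_lin].
Qed.
Lemma degQspan (q : QQ) : exists (s : seq int) (c : int -> QQ),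
  (forall k, degQ k (c k)) /\ q = \sum_(k <- s) c k.
Proof.
have [s [c [hc hr]]] := deg_span G (repr q).
exists s, (fun k => pi (c k)); split; first by move=> k; exists (c k).
by rewrite -pi_sum -hr pi_repr.
Qed.

Lemma sum_uniq_pick (s : seq int) (c : int -> V) k : uniq s -> k \in s ->
  \sum_(k' <- s | k' == k) c k' = c k.
Proof.
move=> us ks; rewrite big_mkcond /=.
rewrite (eq_bigr (fun k' => if k == k' then c k else 0)); first exact: sum_if_eq.
by move=> k' _; case: eqP => [->|h]; rewrite ?eqxx //; case: eqP => // e; case: h.
Qed.

Lemma degQindep (s : seq int) (c : int -> QQ) : uniq s ->
  (forall k, k \in s -> degQ k (c k)) -> \sum_(k <- s) c k = 0 ->
  forall k, k \in s -> c k = 0.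
Proof.
move=> us hc hs.
have [v hv] : exists v : int -> V, forall k, k \in s -> deg G k (v k) /\ c k = pi (v k).
  exists (fun k => epsilon (inhabits 0) (fun v => deg G k v /\ c k = pi v)).
  move=> k ks; apply: (epsilon_spec (inhabits 0) (fun v => deg G k v /\ c k = pi v)).
  by have [w [hw ->]] := hc k ks; exists w.
have Isum : I (\sum_(k <- s) v k).
  rewrite -[X in I X]subr0; apply/(piP I0 Ilin); rewrite pi_sum pi0 -[RHS]hs big_seq [RHS]big_seq.
  by apply: eq_bigr => k ks; rewrite (hv k ks).2.
move=> k ks; rewrite (hv k ks).2.
have Ivk : I (gsum [seq (k', v k') | k' <- s] k).
  apply: (I_group Isum).
  - by move=> p /mapP [k' k's ->] /=; exact: (hv k' k's).1.
  - by rewrite big_map.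
move: Ivk; rewrite /gsum big_map /= sum_uniq_pick // => Ivk.
by rewrite -(pi0 I0 Ilin); apply/(piP I0 Ilin); rewrite subr0.
Qed.

Lemma brQDl (a : K) (x y z : QQ) : brQ (a *: x + y) z = a *: brQ x z + brQ y z.
Proof.
rewrite -[x]pi_repr -[y]pi_repr -[z]pi_repr -pi_lin !pi_br brDl.
by rewrite pi_lin.
Qed.
Lemma brQDr (a : K) (x y z : QQ) : brQ z (a *: x + y) = a *: brQ z x + brQ z y.
Proof.
rewrite -[x]pi_repr -[y]pi_repr -[z]pi_repr -pi_lin !pi_br brDr.
by rewrite pi_lin.
Qed.
Lemma brQdeg i j x y : degQ i x -> degQ j y -> degQ (i + j) (brQ x y).
Proof.
move=> [v [hv ->]] [w [hw ->]]; exists (br G v w); split; [exact: br_deg | exact: pi_br].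
Qed.
Lemma brQanti i j x y : degQ i x -> degQ j y -> brQ x y = - (ksign K i j *: brQ y x).
Proof.
move=> [v [hv ->]] [w [hw ->]].
by rewrite !pi_br (br_anti hv hw) pi_opp pi_scale.
Qed.
Lemma brQjac i j x y z : degQ i x -> degQ j y ->
  brQ x (brQ y z) = brQ (brQ x y) z + ksign K i j *: brQ y (brQ x z).
Proof.
move=> [v [hv ->]] [w [hw ->]]; rewrite -[z]pi_repr.
by rewrite !pi_br (br_jacobi _ hv hw) pi_add pi_scale.
Qed.

Definition LQ : LieSA QQ :=
  @Build_LieSA K QQ degQ degQ0 degQD degQspan degQindep brQ brQDl brQDr brQdeg brQanti brQjac.


Definition fQ (q : QQ) : V := epsilon (inhabits 0) (fun v => local_hom G v /\ q = pi v).

Lemma local_homP v : local_hom G v <-> exists2 k, is_local_deg k & deg G k v.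
Proof.
split; first by case=> [h|[h|h]]; [exists (-1) | exists 0 | exists 1].
by move=> [k /orP[/orP[/eqP ->|/eqP ->]|/eqP ->] h]; rewrite /local_hom; tauto.
Qed.

Lemma fpi v k : is_local_deg k -> deg G k v -> fQ (pi v) = v.
Proof.
move=> hk hv.
have hl : local_hom G v by apply/local_homP; exists k.
have := epsilon_spec (inhabits 0) (fun v' => local_hom G v' /\ pi v = pi v') (ex_intro _ v (conj hl erefl)).
rewrite -/(fQ (pi v)); set v' := fQ (pi v); case=> /local_homP [k' hk' hv'] /(piP I0 Ilin) hI.
case: (eqVneq k k') => [ek|nk].
  subst k'; have hd : deg G k (v - v').
    by have := @dgD _ _ (LLG G) k (-1) _ _ hv' hv; rewrite scaleN1r addrC.
  by have := Iloc hI hd hk; move/eqP; rewrite subr_eq0 => /eqP ->.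
have hu : forall p, p \in [:: (k, v); (k', - v')] -> deg G p.1 p.2.
  move=> p; rewrite !inE => /orP[/eqP -> //|/eqP -> /=]; exact: (dgN (L := LLG G)).
have hs : v - v' = \sum_(p <- [:: (k, v); (k', - v')]) p.2 by rewrite !big_cons big_nil addr0.
have g1 := I_group hI hu hs k.
have g2 := I_group hI hu hs k'.
have nk' : k' != k by rewrite eq_sym.
move: g1 g2; rewrite /gsum !big_cons big_nil /= !eqxx ?(negPf nk) ?(negPf nk') ?addr0 ?add0r.
rewrite ?big_nil ?addr0 => g1 g2; have -> := Iloc g1 hv hk.
have := Iloc g2 (dgN (L := LLG G) hv') hk'.
by move/eqP; rewrite oppr_eq0 => /eqP ->.
Qed.

Lemma isoQ : local_iso LQ G fQ.
Proof.
split; [|split; [|split; [|split]]].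
- by move=> k hk x [v [hv ->]]; rewrite (fpi hk hv).
- move=> k hk a x y [v [hv ->]] [w [hw ->]].
  rewrite -pi_lin (fpi hk (degD a hv hw)) (fpi hk hv) (fpi hk hw) //.
- by move=> k hk x y [v [hv ->]] [w [hw ->]]; rewrite (fpi hk hv) (fpi hk hw) => ->.
- by move=> k hk y hy; exists (pi y); [exists y | exact: fpi hk hy].
- move=> i j hi hj hij x y [v [hv ->]] [w [hw ->]].
  rewrite /= pi_br (fpi hij (br_deg hv hw)) (fpi hi hv) (fpi hj hw) //.
Qed.

Lemma gen_pi v : generated G (local_hom G) v -> generated LQ (local_hom LQ) (pi v).
Proof.
elim=> [x hx | | a x y _ hx _ hy | x y _ hx _ hy].
- apply: gen_base; have [k hk hxk] := (local_homP x).1 hx.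
  have : degQ k (pi x) by exists x.
  by move: hk => /orP[/orP[/eqP ->|/eqP ->]|/eqP ->]; rewrite /local_hom; tauto.
- by rewrite pi0; exact: gen_zero.
- by rewrite pi_lin; exact: gen_lin.
- by rewrite -pi_br; exact: (@gen_br _ _ LQ).
Qed.

Lemma locQ : locally_generated LQ.
Proof. by move=> q; rewrite -[q]pi_repr; apply: gen_pi. Qed.

Lemma quot_kill : minimal G -> forall x, I x -> x = 0.
Proof.
move=> [_ hm].
have [g [[gl [gd gb]] gf]] := hm _ LQ locQ fQ isoQ.
have g0 : g 0 = 0.
  have := gl 1 0 0; rewrite !scale1r addr0 => h.
  by move/(congr1 (fun t => t - g 0)): h; rewrite addrK subrr => /esym.
have gpi : forall v, g (pi v) = v.
  move=> v; elim: (hG v) => [x hx | | a x y _ hx _ hy | x y _ hx _ hy].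
  - have [k hk hxk] := (local_homP x).1 hx.
    rewrite gf; first exact: (fpi hk hxk).
    have : degQ k (pi x) by exists x.
    by move: hk => /orP[/orP[/eqP ->|/eqP ->]|/eqP ->]; rewrite /local_hom; tauto.
  - by rewrite pi0 g0.
  - by rewrite pi_lin gl hx hy.
  - by rewrite -pi_br (gb (pi x) (pi y)) hx hy.
move=> x hx; rewrite -(gpi x).
have -> : pi x = pi 0 by apply/(piP I0 Ilin); rewrite subr0.
by rewrite pi0 g0.
Qed.

End Quot2.

Section Ideal.
Variables (K : numFieldType) (V : lmodType K) (G : LieSA V) (s : bool).
Hypothesis hG : locally_generated G.

Definition sg (x : int) : int := if s then x else - x.
Lemma sgD x y : sg (x + y) = sg x + sg y.
Proof. by rewrite /sg; case: s => //; rewrite opprD. Qed.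
Lemma sgK x : sg (sg x) = x.
Proof. by rewrite /sg; case: s => //; rewrite opprK. Qed.
Lemma sgN x : sg (- x) = - sg x.
Proof. by rewrite /sg; case: s. Qed.

Inductive I0 : int -> V -> Prop :=
 | I0b d y : deg G d y -> 2 <= sg d ->
     (forall k z, 1 <= k -> deg G (sg (- k)) z -> br G z y = 0) -> I0 d y
 | I0s d y j u : I0 d y -> deg G j u -> 0 <= sg j -> I0 (j + d) (br G u y).

Definition Iid := spn (fun y => exists d, I0 d y).

Lemma I0_deg d y : I0 d y -> deg G d y /\ 2 <= sg d.
Proof.
elim=> [d0 y0 h1 h2 _ | d0 y0 j u _ [h1 h2] hu hj]; first by [].
by split; [exact: br_deg | rewrite sgD; lia].
Qed.

Lemma Iid_lin a x y : Iid x -> Iid y -> Iid (a *: x + y).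
Proof. exact: spnL. Qed.
Lemma Iid0 : Iid 0.
Proof. exact: spn0. Qed.

Lemma Idec y : Iid y -> exists t : seq (int * V), (forall p, p \in t -> I0 p.1 p.2) /\
  y = \sum_(p <- t) p.2.
Proof.
elim=> [| x [d hx] | a x y' _ [t1 [h1 ->]] _ [t2 [h2 ->]]].
- by exists [::]; rewrite big_nil.
- by exists [:: (d, x)]; rewrite big_seq1; split => // p; rewrite mem_seq1 => /eqP ->.
- exists ([seq (p.1, a *: p.2) | p <- t1] ++ t2); split.
  + move=> p; rewrite mem_cat => /orP[/mapP[q qs ->] /=|]; last exact: h2.
    have := h1 q qs; elim=> [d0 y0 hd hs hk | d0 y0 j u _ IH hu hj].
    * apply: I0b => //; first exact: (dgZ (L := LLG G)).
      by move=> k z hk' hz; rewrite brZr (hk k z hk' hz) scaler0.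
    * by rewrite -brZr; apply: I0s.
  + by rewrite big_cat big_map /= scaler_sumr.
Qed.

Lemma Igr y : Iid y -> exists t : seq (int * V),
  (forall p, p \in t -> Iid p.2 /\ deg G p.1 p.2) /\ y = \sum_(p <- t) p.2.
Proof.
move=> /Idec [t [ht ->]]; exists t; split => // p /ht hp.
by split; [apply: spnB; exists p.1 | exact: (I0_deg hp).1].
Qed.

Lemma Iloc y k : Iid y -> deg G k y -> is_local_deg k -> y = 0.
Proof.
move=> /Idec [t [ht hy]] hk hl.
have := @gsum_homog _ _ (LLG G) (@LLG_indep _ _ G) t k y _ hk hy k.
rewrite eqxx => <-; last by move=> p /ht /I0_deg [].
rewrite /gsum big1_seq // => p /andP[/eqP ep /ht /I0_deg [_]].
move: hl; rewrite ep /sg /is_local_deg; case: s; lia.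
Qed.

Lemma Ipos j u y : deg G j u -> 0 <= sg j -> Iid y -> Iid (br G u y).
Proof.
move=> hu hj; elim=> [| x [d hx] | a x y' _ h1 _ h2].
- by rewrite br0r; exact: Iid0.
- by apply: spnB; exists (j + d); exact: I0s.
- by rewrite brDr; exact: Iid_lin.
Qed.

Lemma Ineg d y : I0 d y -> forall j u, deg G j u -> sg j <= -1 -> Iid (br G u y).
Proof.
elim=> [d0 y0 h1 h2 hk | d0 y0 j' u' hy0 IH hu' hj'] j u hu hj.
- have -> : br G u y0 = 0.
    by apply: (hk (- sg j)); [lia | rewrite opprK sgK].
  exact: Iid0.
- rewrite (br_jacobi _ hu hu'); apply: spnD; last first.
    by apply: spnZ; apply: (Ipos hu' hj'); exact: IH hu hj.
  have huu := br_deg hu hu'.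
  have [hp|hn] : 0 <= sg (j + j') \/ sg (j + j') <= -1 by lia.
  + by apply: spnB; exists ((j + j') + d0); apply: I0s.
  + exact: IH huu hn.
Qed.

Lemma Il v y : Iid y -> Iid (br G v y).
Proof.
move=> hy; have [l [c [hc ->]]] := deg_span G v.
rewrite br_suml; apply: (big_ind Iid); [exact: Iid0 | move=> *; exact: (spnD (S := _)) | ].
move=> k _; have [hp|hn] : 0 <= sg k \/ sg k <= -1 by lia.
- exact: (Ipos (hc k) hp).
- elim: hy => [| x [d hx] | a x y' _ h1 _ h2].
  + by rewrite br0r; exact: Iid0.
  + exact: (Ineg hx (hc k) hn).
  + by rewrite brDr; exact: Iid_lin.
Qed.

Lemma Ir v y : Iid y -> Iid (br G y v).
Proof.
move=> hy; have [l [c [hc ->]]] := deg_span G v.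
rewrite br_sumr; apply: (big_ind Iid); [exact: Iid0 | move=> *; exact: (spnD (S := _)) | ].
move=> k _; elim: hy => [| x [d hx] | a x y' _ h1 _ h2].
- by rewrite br0l; exact: Iid0.
- rewrite (br_anti (I0_deg hx).1 (hc k)); apply: spnN; apply: spnZ.
  by apply: Il; apply: spnB; exists d.
- by rewrite brDl; exact: Iid_lin.
Qed.

Lemma Iid_of x : in_graded_span G (fun k => 2 <= sg k) x ->
  (forall k z, 1 <= k -> deg G (sg (- k)) z -> br G z x = 0) -> Iid x.
Proof.
move=> [l [c [hl [hc ->]]]] hkill.
have -> : \sum_(k <- l) c k = \sum_(p <- [seq (k, c k) | k <- l]) p.2 by rewrite big_map.
apply: (sum_groups (S := Iid)); [exact: Iid0 | move=> *; exact: (spnD (S := _)) |].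
move=> D; rewrite /gsum big_map /=.
have [hD|hD] := boolP (2 <= sg D); last first.
  rewrite big1_seq; first exact: Iid0.
  by move=> k /andP[/eqP ek /hl]; rewrite ek (negPf hD).
apply: spnB; exists D; apply: I0b => //.
  by rewrite big_seq_cond; apply: (@dg_sum _ _ (LLG G)) => k /andP[_ /eqP <-]; exact: hc.
move=> k z hk hz.
have h0 : gsum [seq (sg (- k) + p.1, br G z p.2) | p <- [seq (k0, c k0) | k0 <- l]] (sg (- k) + D) = 0.
  apply: (gsum_zero (@LLG_indep _ _ G)).
  - by move=> p /mapP[q /mapP[k0 _ ->] ->] /=; apply: br_deg.
  - by rewrite big_map big_map /= -br_sumr (hkill k z hk hz).
move: h0; rewrite /gsum big_map big_map /= br_sumr.
by under eq_bigl do rewrite (inj_eq (addrI _)).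
Qed.

Lemma ideal_trans : minimal G ->
  forall x, in_graded_span G (fun k => 2 <= sg k) x ->
  (forall k z, 1 <= k -> deg G (sg (- k)) z -> br G z x = 0) -> x = 0.
Proof.
move=> hmin x hx hk.
exact: (quot_kill (I := Iid) Iid0 Iid_lin Il Ir Igr Iloc hG hmin (Iid_of hx hk)).
Qed.
End Ideal.

Lemma min_trans (K : numFieldType) (V : lmodType K) (G : LieSA V) :
  locally_generated G -> minimal G -> mn_transitive G (-2) 2.
Proof.
move=> hG hmin; split.
- move=> x hx hk; apply: (ideal_trans (s := false) hG hmin).
  + by case: hx => l [c [hl hc]]; exists l, c; split => // k /hl; rewrite /sg; lia.
  + by move=> k z h1; rewrite /sg opprK; exact: hk.
- move=> x hx hk; apply: (ideal_trans (s := true) hG hmin) => //.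
Qed.

Lemma trans_min (K : numFieldType) (V : lmodType K) (G : LieSA V) :
  locally_generated G -> mn_transitive G (-2) 2 -> minimal G.
Proof.
move=> hG ht; split => // W H hH f hf; exact: (partB hf hH hG ht).
Qed.

Lemma trans_mono (K : numFieldType) (V : lmodType K) (G : LieSA V) :
  mn_transitive G 0 0 -> mn_transitive G (-2) 2.
Proof.
move=> [hp hn]; split.
- move=> x [l [c [hl hc]]] hk; apply: hp => //.
  by exists l, c; split => // k /hl; lia.
- move=> x [l [c [hl hc]]] hk; apply: hn => //.
  by exists l, c; split => // k /hl; lia.
Qed.

Theorem corollary2p14 :
  (forall (K : numFieldType) (V : lmodType K) (G : LieSA V),
      locally_generated G -> (minimal G <-> mn_transitive G (-2) 2)) /\
  (forall (K : numFieldType) (V : lmodType K) (G : LieSA V),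
      locally_generated G -> mn_transitive G 0 0 -> minimal G).
Proof.
split.
- move=> K V G hG; split; [exact: min_trans | exact: trans_min].
- move=> K V G hG h00; apply: trans_min => //; exact: trans_mono.
Qed.
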